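(* Let $\alpha$ be an ordinal and let $\mathcal{X},\mathcal{Y}$ be families of metric spaces with $\mathcal{X},\mathcal{Y}\in\mathfrak{C}_\alpha$. Then $\mathcal{X}\otimes\mathcal{Y}\in\mathfrak{C}_\alpha$.
   Context: $\mathcal{X}\otimes\mathcal{Y}=\{X\times Y\colon X\in\mathcal{X},Y\in\mathcal{Y}\}$, where $X\times Y$ carries the metric $d((x,y),(x',y'))=\sqrt{d_X(x,x')^2+d_Y(y,y')^2}$. A family $\mathcal{U}$ of metric subspaces of a metric space $(X,d)$ is $r$-disjoint if $d(x,y)>r$ whenever $x\in U$, $y\in U'$, $U\neq U'$ in $\mathcal{U}$. For families $\mathcal{X},\mathcal{Y}$ and $R\in\mathbb{R}^{\mathbb{N}}$, $\mathcal{X}\xrightarrow{R}\mathcal{Y}$ means: there is an integer $k$ such that for each $X\in\mathcal{X}$ there are subcollections $\mathcal{U}_1,\dots,\mathcal{U}_k\subseteq\mathcal{Y}$ of subspaces of $X$, each $\mathcal{U}_i$ being $R_i$-disjoint, with $\bigcup_i\mathcal{U}_i$ covering $X$. A family is bounded if the diameters of its members are uniformly bounded. $\mathfrak{C}_0$ is the class of bounded families; for an ordinal $\alpha>0$, $\mathfrak{C}_\alpha$ is the class of families $\mathcal{X}$ such that for every $R\in\mathbb{R}^{\mathbb{N}}$ there exist $\beta<\alpha$ and $\mathcal{Y}\in\mathfrak{C}_\beta$ with $\mathcal{X}\xrightarrow{R}\mathcal{Y}$. *)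

(* Defs.v *)
From Stdlib Require Import Reals.
Open Scope R_scope.

Record mspace : Type := MSpace { carrier : Type; dist : carrier -> carrier -> R }.

Definition is_metric (M : mspace) : Prop :=
  (forall x y : carrier M, 0 <= dist M x y) /\
  (forall x y : carrier M, dist M x y = 0 <-> x = y) /\
  (forall x y : carrier M, dist M x y = dist M y x) /\
  (forall x y z : carrier M, dist M x z <= dist M x y + dist M y z).

Definition mfamily : Type := mspace -> Prop.

Definition family_of_metric_spaces (F : mfamily) : Prop :=
  forall M, F M -> is_metric M.

Definition subspace (M : mspace) (A : carrier M -> Prop) : mspace :=
  MSpace {x : carrier M | A x} (fun x y => dist M (proj1_sig x) (proj1_sig y)).

Definition isometric (M N : mspace) : Prop :=
  exists f : carrier M -> carrier N,
    (forall y, exists! x, f x = y) /\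
    (forall x y, dist N (f x) (f y) = dist M x y).

Definition subspace_in (F : mfamily) (M : mspace) (A : carrier M -> Prop) : Prop :=
  exists N, F N /\ isometric N (subspace M A).

Definition prod_space (X Y : mspace) : mspace :=
  MSpace (carrier X * carrier Y)
    (fun p q => sqrt (dist X (fst p) (fst q) ^ 2 + dist Y (snd p) (snd q) ^ 2)).

Definition tensor (FX FY : mfamily) : mfamily :=
  fun M => exists X Y, FX X /\ FY Y /\ M = prod_space X Y.

Definition r_disjoint (r : R) (M : mspace) (U : (carrier M -> Prop) -> Prop) : Prop :=
  forall A A', U A -> U A' -> ~ (forall x, A x <-> A' x) ->
    forall x y, A x -> A' y -> dist M x y > r.

(** 𝒳 --R--> 𝒴 (R : sequence of reals, used at indices 1..k). *)
Definition decomposes (Rs : nat -> R) (FX FY : mfamily) : Prop :=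
  exists k : nat, forall M, FX M ->
    exists U : nat -> (carrier M -> Prop) -> Prop,
      (forall i, (1 <= i <= k)%nat -> forall A, U i A -> subspace_in FY M A) /\
      (forall i, (1 <= i <= k)%nat -> r_disjoint (Rs i) M (U i)) /\
      (forall x, exists i, (1 <= i <= k)%nat /\ exists A, U i A /\ A x).

Definition bounded (F : mfamily) : Prop :=
  exists B : R, forall M, F M -> forall x y : carrier M, dist M x y <= B.

(** Ordinals are represented as elements of an arbitrary strict well-order
    [lt] on a type [O]. *)
Definition strict_well_order {O : Type} (lt : O -> O -> Prop) : Prop :=
  well_founded lt /\
  (forall a b c, lt a b -> lt b c -> lt a c) /\
  (forall a b, lt a b \/ a = b \/ lt b a).

(** The classes 𝔠_α: [DC lt a F] means F ∈ 𝔠_a.  Over a well-founded order the least fixed point below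
    is the transfinite-recursive definition. *)
Inductive DC {O : Type} (lt : O -> O -> Prop) : O -> mfamily -> Prop :=
| C_zero : forall a F, (forall b, ~ lt b a) -> bounded F -> DC lt a F
| C_succ : forall a F, (exists b, lt b a) ->
    (forall Rs : nat -> R, exists b G, lt b a /\ DC lt b G /\ decomposes Rs F G) ->
    DC lt a F.

(* Main.v *)
Require Import Defs.
From Stdlib Require Import Reals.
From Stdlib Require Import Lra Lia Psatz Classical ClassicalEpsilon ProofIrrelevance.
Open Scope R_scope.

Definition nn (M : mspace) : Prop := forall x y : carrier M, 0 <= Defs.dist M x y.
Definition nnF (F : mfamily) : mfamily := fun M => F M /\ nn M.

Definition dec_k (k : nat) (Rs : nat -> R) (FX FY : mfamily) : Prop :=
  forall M, FX M ->
    exists U : nat -> (carrier M -> Prop) -> Prop,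
      (forall i, (1 <= i <= k)%nat -> forall A, U i A -> subspace_in FY M A) /\
      (forall i, (1 <= i <= k)%nat -> r_disjoint (Rs i) M (U i)) /\
      (forall x, exists i, (1 <= i <= k)%nat /\ exists A, U i A /\ A x).

Lemma choice_fun {A B : Type} (P : A -> B -> Prop) :
  (forall x, exists y, P x y) -> exists f : A -> B, forall x, P x (f x).
Proof.
  intros H. exists (fun x => proj1_sig (constructive_indefinite_description _ (H x))).
  intros x. exact (proj2_sig (constructive_indefinite_description _ (H x))).
Qed.

Lemma sig_eq {T : Type} (P : T -> Prop) (a b : {x | P x}) :
  proj1_sig a = proj1_sig b -> a = b.
Proof.
  destruct a as [x px], b as [y py]; simpl; intros E; subst.
  f_equal; apply proof_irrelevance.
Qed.

Lemma nn_iso M N A : nn M -> isometric N (subspace M A) -> nn N.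
Proof.
  intros H [f [_ Hf]] x y. rewrite <- Hf. simpl. apply H.
Qed.

Lemma subspace_in_mono (F G : mfamily) M A :
  (forall N, F N -> G N) -> subspace_in F M A -> subspace_in G M A.
Proof. intros H [N [HN HI]]. exists N; split; auto. Qed.

Lemma dec_sub Rs F F' G : (forall M, F' M -> F M) -> decomposes Rs F G -> decomposes Rs F' G.
Proof. intros H [k Hk]. exists k. intros M HM. apply Hk, H, HM. Qed.

Lemma DC_sub {O} (lt : O -> O -> Prop) a F G :
  DC lt a F -> (forall M, G M -> F M) -> DC lt a G.
Proof.
  intros H; revert G; destruct H as [a F Hmin [B HB] | a F Hex Hdec]; intros G HG.
  - apply C_zero; auto. exists B; intros M HM; apply HB, HG, HM.
  - apply C_succ; auto. intros Rs. destruct (Hdec Rs) as [b [G' [Hb [HD Hd]]]].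
    exists b, G'; repeat split; auto. eapply dec_sub; eauto.
Qed.

Lemma dec_self Rs G : decomposes Rs G G.
Proof.
  exists 1%nat. intros M HM.
  exists (fun i A => forall x, A x). split; [|split].
  - intros i Hi A HA. exists M; split; auto.
    exists (fun x => exist A x (HA x)). split.
    + intros [y py]. exists y. split.
      * apply sig_eq; reflexivity.
      * intros x' Hx'. apply (f_equal (@proj1_sig _ _)) in Hx'. simpl in Hx'. symmetry; exact Hx'.
    + intros x y. reflexivity.
  - intros i Hi A A' HA HA' Hne. exfalso. apply Hne. intros x; split; auto.
  - intros x. exists 1%nat. split; [lia|]. exists (fun _ => True). split; auto.
Qed.

Lemma DC_lift {O} (lt : O -> O -> Prop) (Htr : forall a b c, lt a b -> lt b c -> lt a c) b c G :
  DC lt b G -> (b = c \/ lt b c) -> DC lt c G.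
Proof.
  intros H [E|Hbc]; [subst; auto|].
  apply C_succ; [exists b; auto|].
  intros Rs. destruct H as [b F Hmin Hbd | b F Hex Hdec].
  - exists b, F; repeat split; auto. apply C_zero; auto. apply dec_self.
  - destruct (Hdec Rs) as [b' [G' [Hb' [HD Hd]]]]. exists b', G'; repeat split; eauto.
Qed.

Lemma max_level {O} (lt : O -> O -> Prop) (Htri : forall a b, lt a b \/ a = b \/ lt b a) a b1 b2 :
  lt b1 a -> lt b2 a -> exists c, lt c a /\ (b1 = c \/ lt b1 c) /\ (b2 = c \/ lt b2 c).
Proof.
  intros H1 H2. destruct (Htri b1 b2) as [H|[H|H]].
  - exists b2; auto.
  - exists b2; subst; auto.
  - exists b1; auto.
Qed.

Definition unionF (F G : mfamily) : mfamily := fun M => F M \/ G M.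

Lemma dec_union Rs F1 F2 G1 G2 : decomposes Rs F1 G1 -> decomposes Rs F2 G2 ->
  decomposes Rs (unionF F1 F2) (unionF G1 G2).
Proof.
  intros [k1 H1] [k2 H2]. exists (Nat.max k1 k2). intros M [HM|HM].
  - destruct (H1 M HM) as [U [P1 [P2 P3]]].
    exists (fun i A => (i <= k1)%nat /\ U i A). split; [|split].
    + intros i Hi A [Hik HA]. eapply subspace_in_mono; [| apply (P1 i); [lia|exact HA]].
      intros N HN; left; exact HN.
    + intros i Hi. unfold r_disjoint. intros A A' [Hik HA] [_ HA'] Hne x y Hx Hy.
      exact (P2 i ltac:(lia) A A' HA HA' Hne x y Hx Hy).
    + intros x. destruct (P3 x) as [i [Hi [A [HA Hx]]]]. exists i; split; [lia|].
      exists A; split; auto. split; [lia|auto].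
  - destruct (H2 M HM) as [U [P1 [P2 P3]]].
    exists (fun i A => (i <= k2)%nat /\ U i A). split; [|split].
    + intros i Hi A [Hik HA]. eapply subspace_in_mono; [| apply (P1 i); [lia|exact HA]].
      intros N HN; right; exact HN.
    + intros i Hi. unfold r_disjoint. intros A A' [Hik HA] [_ HA'] Hne x y Hx Hy.
      exact (P2 i ltac:(lia) A A' HA HA' Hne x y Hx Hy).
    + intros x. destruct (P3 x) as [i [Hi [A [HA Hx]]]]. exists i; split; [lia|].
      exists A; split; auto. split; [lia|auto].
Qed.

Lemma DC_cases {O} (lt : O -> O -> Prop) a F : DC lt a F ->
  ((forall b, ~ lt b a) /\ Defs.bounded F) \/
  ((exists b, lt b a) /\ forall Rs, exists b G, lt b a /\ DC lt b G /\ decomposes Rs F G).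
Proof. intros H; destruct H; auto. Qed.

Lemma DC_union {O} (lt : O -> O -> Prop) (Hwo : strict_well_order lt) :
  forall a F G, DC lt a F -> DC lt a G -> DC lt a (unionF F G).
Proof.
  destruct Hwo as [Hwf [Htr Htri]].
  intros a. induction a as [a IH] using (well_founded_ind Hwf).
  intros F G HF HG.
  destruct (DC_cases lt a F HF) as [[Hmin [B1 HB1]] | [Hex HdF]];
  destruct (DC_cases lt a G HG) as [[Hmin' [B2 HB2]] | [Hex' HdG]].
  - apply C_zero; auto. exists (Rmax B1 B2). intros M [HM|HM] x y.
    + eapply Rle_trans; [apply HB1; exact HM| apply Rmax_l].
    + eapply Rle_trans; [apply HB2; exact HM| apply Rmax_r].
  - exfalso. destruct Hex' as [b Hb]; exact (Hmin b Hb).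
  - exfalso. destruct Hex as [b Hb]; exact (Hmin' b Hb).
  - apply C_succ; auto. intros Rs.
    destruct (HdF Rs) as [b1 [G1 [Hb1 [HD1 Hd1]]]].
    destruct (HdG Rs) as [b2 [G2 [Hb2 [HD2 Hd2]]]].
    destruct (max_level lt Htri a b1 b2 Hb1 Hb2) as [c [Hc [Hc1 Hc2]]].
    exists c, (unionF G1 G2). split; [exact Hc|split].
    + apply IH; auto; eapply DC_lift; eauto.
    + apply dec_union; auto.
Qed.

Definition Gu (Z : nat -> mfamily) (n : nat) : mfamily :=
  fun M => exists i, (i <= n)%nat /\ Z i M.

Lemma DC_Gu {O} (lt : O -> O -> Prop) (Hwo : strict_well_order lt) a Z :
  (forall i, exists b, lt b a /\ DC lt b (Z i)) ->
  forall n, exists b, lt b a /\ DC lt b (Gu Z n).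
Proof.
  intros HZ n. pose proof Hwo as [Hwf [Htr Htri]].
  induction n as [|n [b [Hb HD]]].
  - destruct (HZ 0%nat) as [b [Hb HD]]. exists b; split; auto.
    eapply DC_sub; [exact HD|]. intros M [i [Hi HM]].
    replace i with 0%nat in HM by lia. exact HM.
  - destruct (HZ (S n)) as [b' [Hb' HD']].
    destruct (max_level lt Htri a b b' Hb Hb') as [c [Hc [H1 H2]]].
    exists c; split; auto.
    eapply DC_sub; [apply (DC_union lt Hwo c (Gu Z n) (Z (S n))); eapply DC_lift; eauto|].
    intros M [i [Hi HM]]. destruct (Nat.eq_dec i (S n)) as [E|Hne].
    + subst; right; exact HM.
    + left; exists i; split; [lia|exact HM].
Qed.

Fixpoint offs (K : (nat -> R) -> nat) (Rs : nat -> R) (i : nat) : nat :=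
  match i with
  | 0 => 0%nat
  | S i' => (offs K Rs i' + K (fun j => Rs (offs K Rs i' + j)%nat))%nat
  end.

Lemma offs_S K Rs i :
  offs K Rs (S i) = (offs K Rs i + K (fun j => Rs (offs K Rs i + j)%nat))%nat.
Proof. reflexivity. Qed.

Lemma offs_mono K Rs i i' : (i <= i')%nat -> (offs K Rs i <= offs K Rs i')%nat.
Proof. induction 1; [lia|]. rewrite offs_S. lia. Qed.

Fixpoint maxupto (Rs : nat -> R) (n : nat) : R :=
  match n with 0 => Rs 0%nat | S n' => Rmax (maxupto Rs n') (Rs (S n')) end.

Lemma maxupto_ge Rs m n : (m <= n)%nat -> Rs m <= maxupto Rs n.
Proof.
  induction 1.
  - destruct m; simpl; [lra| apply Rmax_r].
  - simpl. eapply Rle_trans; [exact IHle | apply Rmax_l].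
Qed.

Lemma sqrt_gt_l dx dy r : dx > r -> sqrt (dx ^ 2 + dy ^ 2) > r.
Proof.
  intros H. destruct (Rle_lt_dec dx 0).
  - pose proof (sqrt_pos (dx^2+dy^2)). lra.
  - assert (H0 : sqrt (dx^2) <= sqrt (dx^2+dy^2)) by (apply sqrt_le_1_alt; nra).
    rewrite sqrt_pow2 in H0 by lra. lra.
Qed.

Lemma sqrt_gt_r dx dy r : dy > r -> sqrt (dx ^ 2 + dy ^ 2) > r.
Proof. intros H. rewrite Rplus_comm. apply sqrt_gt_l; exact H. Qed.

Lemma iso_prod X Y U V N1 N2 :
  isometric N1 (subspace X U) -> isometric N2 (subspace Y V) ->
  isometric (prod_space N1 N2)
    (subspace (prod_space X Y) (fun p : carrier X * carrier Y => U (fst p) /\ V (snd p))).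
Proof.
  intros [f [Hf1 Hf2]] [g [Hg1 Hg2]].
  exists (fun p : carrier N1 * carrier N2 =>
            exist (fun q : carrier X * carrier Y => U (fst q) /\ V (snd q))
             (proj1_sig (f (fst p)), proj1_sig (g (snd p)))
             (conj (proj2_sig (f (fst p))) (proj2_sig (g (snd p))))).
  split.
  - intros [[x y] [pu pv]].
    destruct (Hf1 (exist _ x pu)) as [n1 [Hn1 Hu1]].
    destruct (Hg1 (exist _ y pv)) as [n2 [Hn2 Hu2]].
    exists (n1, n2). split.
    + apply sig_eq. simpl. rewrite Hn1, Hn2. reflexivity.
    + intros [m1 m2] Hm. apply (f_equal (@proj1_sig _ _)) in Hm. simpl in Hm.
      injection Hm as E1 E2.
      f_equal; [apply Hu1 | apply Hu2]; apply sig_eq; simpl; assumption.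
  - intros [a1 a2] [b1 b2].
    pose proof (Hf2 a1 b1) as E1; pose proof (Hg2 a2 b2) as E2; simpl in *.
    rewrite E1, E2. reflexivity.
Qed.

Lemma main_gen {O} (lt : O -> O -> Prop) (Hwo : strict_well_order lt) :
  forall a FX FY, (forall M, FX M -> nn M) -> (forall M, FY M -> nn M) ->
  DC lt a FX -> DC lt a FY -> DC lt a (tensor FX FY).
Proof.
  pose proof Hwo as [Hwf [Htr Htri]].
  intros a. induction a as [a IH] using (well_founded_ind Hwf).
  intros FX FY nnX nnY HCX HCY.
  destruct (DC_cases lt a FX HCX) as [[Hmin [B1 HB1]] | [Hex HdX]];
  destruct (DC_cases lt a FY HCY) as [[Hmin' [B2 HB2]] | [Hex' HdY]].
  - apply C_zero; auto. exists (sqrt (B1^2 + B2^2)).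
    intros M [X [Y [HXm [HYm E]]]]; subst M. intros [x1 y1] [x2 y2]. simpl.
    apply sqrt_le_1_alt.
    pose proof (HB1 X HXm x1 x2); pose proof (HB2 Y HYm y1 y2);
    pose proof (nnX X HXm x1 x2); pose proof (nnY Y HYm y1 y2). nra.
  - exfalso. destruct Hex' as [b Hb]; exact (Hmin b Hb).
  - exfalso. destruct Hex as [b Hb]; exact (Hmin' b Hb).
  - apply C_succ; auto. intros Rs.
    assert (HchY : forall S : nat -> R, exists t : O * mfamily * nat,
      lt (fst (fst t)) a /\ DC lt (fst (fst t)) (snd (fst t)) /\ dec_k (snd t) S FY (snd (fst t))).
    { intros S; destruct (HdY S) as [b [G [Hb [HD [k Hk]]]]]; exists (b, G, k); simpl; auto. }
    apply choice_fun in HchY. destruct HchY as [ch Hch].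
    set (K := fun S => snd (ch S)) in *.
    set (ZY := fun S => snd (fst (ch S))) in *.
    set (R' := fun i => maxupto Rs (offs K Rs i)).
    destruct (HdX R') as [b1 [Z1 [Hb1 [HD1 [k1 Hk1]]]]].
    set (Zs := fun i => nnF (ZY (fun j => Rs (offs K Rs i + j)%nat))).
    assert (HZs : forall i, exists b, lt b a /\ DC lt b (Zs i)).
    { intros i. destruct (Hch (fun j => Rs (offs K Rs i + j)%nat)) as [H1 [H2 _]].
      eexists; split; [exact H1|]. eapply DC_sub; [exact H2|]. intros M [HM _]; exact HM. }
    destruct (DC_Gu lt Hwo a Zs HZs k1) as [b2 [Hb2 HD2]].
    destruct (max_level lt Htri a b1 b2 Hb1 Hb2) as [c [Hc [Hc1 Hc2]]].
    exists c, (tensor (nnF Z1) (Gu Zs k1)). split; [exact Hc| split].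
    + apply IH; auto.
      * intros M [_ H]; exact H.
      * intros M [i [_ [_ H]]]; exact H.
      * eapply DC_lift; [exact Htr| |exact Hc1]. eapply DC_sub; [exact HD1|]. intros M [HM _]; exact HM.
      * eapply DC_lift; [exact Htr| exact HD2 | exact Hc2].
    + exists (offs K Rs k1).
      intros M [X [Y [HXm [HYm E]]]]; subst M.
      destruct (Hk1 X HXm) as [UX [PX1 [PX2 PX3]]].
      assert (HVY : forall i, exists V : nat -> (carrier Y -> Prop) -> Prop,
        (forall j, (1 <= j <= K (fun j => Rs (offs K Rs i + j)%nat))%nat -> forall A, V j A ->
            subspace_in (ZY (fun j => Rs (offs K Rs i + j)%nat)) Y A) /\
        (forall j, (1 <= j <= K (fun j => Rs (offs K Rs i + j)%nat))%nat ->
            r_disjoint (Rs (offs K Rs i + j)%nat) Y (V j)) /\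
        (forall y, exists j, (1 <= j <= K (fun j => Rs (offs K Rs i + j)%nat))%nat /\
            exists A, V j A /\ A y)).
      { intros i. destruct (Hch (fun j => Rs (offs K Rs i + j)%nat)) as [_ [_ H3]]. exact (H3 Y HYm). }
      apply choice_fun in HVY. destruct HVY as [VY HVY].
      exists (fun m C => exists i0, (S i0 <= k1)%nat /\
          (offs K Rs i0 < m <= offs K Rs (S i0))%nat /\
          exists U V, UX (S i0) U /\ VY i0 (m - offs K Rs i0)%nat V /\
          C = (fun p : carrier X * carrier Y => U (fst p) /\ V (snd p))).
      split; [|split].
      * intros m Hm C [i0 [Hi0 [Hmi [U [V [HU [HV EC]]]]]]]. subst C.
        destruct (PX1 (S i0) ltac:(lia) U HU) as [N1 [HN1 I1]].
        destruct (HVY i0) as [PV1 _].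
        assert (E0 := offs_S K Rs i0).
        destruct (PV1 (m - offs K Rs i0)%nat ltac:(lia) V HV) as [N2 [HN2 I2]].
        exists (prod_space N1 N2). split.
        -- exists N1, N2. split; [split; [exact HN1 | eapply nn_iso; [apply nnX; exact HXm | exact I1]] |].
           split; [|reflexivity].
           exists i0. split; [lia|]. split; [exact HN2| eapply nn_iso; [apply nnY; exact HYm| exact I2]].
        -- apply iso_prod; assumption.
      * intros m Hm. unfold r_disjoint.
        intros C C' [i0 [Hi0 [Hmi [U [V [HU [HV EC]]]]]]] [i1 [Hi1 [Hmi1 [U' [V' [HU' [HV' EC']]]]]]] Hne p q Hp Hq.
        subst C C'.
        assert (E0 := offs_S K Rs i0). assert (E1 := offs_S K Rs i1).
        assert (i0 = i1).
        { destruct (Nat.lt_trichotomy i0 i1) as [H|[H|H]]; auto; exfalso.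
          - pose proof (offs_mono K Rs (S i0) i1 H). lia.
          - pose proof (offs_mono K Rs (S i1) i0 H). lia. }
        subst i1.
        destruct p as [x y], q as [x' y']. simpl in Hp, Hq.
        destruct Hp as [Hx Hy], Hq as [Hx' Hy'].
        simpl.
        destruct (classic (forall x, U x <-> U' x)) as [HUU|HUU].
        -- assert (HVV : ~ (forall y, V y <-> V' y)).
           { intros HVV. apply Hne. intros [a0 b0]; simpl.
             specialize (HUU a0); specialize (HVV b0); tauto. }
           destruct (HVY i0) as [_ [PV2 _]].
           pose proof (PV2 (m - offs K Rs i0)%nat ltac:(lia) V V' HV HV' HVV y y' Hy Hy') as Hd.
           replace (offs K Rs i0 + (m - offs K Rs i0))%nat with m in Hd by lia.
           apply sqrt_gt_r; exact Hd.
        -- pose proof (PX2 (S i0) ltac:(lia) U U' HU HU' HUU x x' Hx Hx') as Hd.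
           unfold R' in Hd. pose proof (maxupto_ge Rs m (offs K Rs (S i0)) ltac:(lia)).
           apply sqrt_gt_l. lra.
      * intros [x y].
        destruct (PX3 x) as [i [Hi [U [HU Hx]]]].
        destruct i as [|i0]; [lia|].
        destruct (HVY i0) as [_ [_ PV3]].
        destruct (PV3 y) as [j [Hj [V [HV Hy]]]].
        assert (E0 := offs_S K Rs i0).
        pose proof (offs_mono K Rs (S i0) k1 ltac:(lia)).
        exists (offs K Rs i0 + j)%nat. split; [lia|].
        exists (fun p : carrier X * carrier Y => U (fst p) /\ V (snd p)). split.
        -- exists i0. split; [lia|]. split; [lia|]. exists U, V. split; [exact HU|].
           split; [|reflexivity].
           replace (offs K Rs i0 + j - offs K Rs i0)%nat with j by lia. exact HV.
        -- simpl. auto.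
Qed.

Theorem mainTheorem10 (O : Type) (lt : O -> O -> Prop) (Hwo : strict_well_order lt)
  (a : O) (FX FY : mfamily)
  (HX : family_of_metric_spaces FX) (HY : family_of_metric_spaces FY)
  (HCX : DC lt a FX) (HCY : DC lt a FY) :
  DC lt a (tensor FX FY).
Proof.
  apply main_gen; auto.
  - intros M HM. destruct (HX M HM) as [H _]. exact H.
  - intros M HM. destruct (HY M HM) as [H _]. exact H.
Qed.
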